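(* Let $T>0$, let $r_\alpha,r_\beta,r_v,t_v,\sigma_B,\sigma_W>0$, $\overline{v}_T\in\mathbb{R}$, $\overline{v},f_c,f_d\in C([0,T];\mathbb{R})$, and let $0\le\lambda\le r_\beta\sigma_W^2$. Consider the ODE system on $[0,T]$ $$\begin{cases} \dot\mu_t=\frac{1}{r_\alpha}\mu_t^2+\frac{1}{r_\beta}\eta_t^2-2\eta_t-r_v,\\ \dot\eta_t=\frac{1}{r_\alpha}\mu_t\eta_t+\frac{1}{r_\beta}\rho_t\eta_t-\rho_t-\frac{\lambda}{r_\beta\sigma_W^2}\eta_tf_c(t),\\ \dot\rho_t=\frac{1}{r_\alpha}\eta_t^2+\frac{1}{r_\beta}\rho_t^2-\frac{2\lambda}{r_\beta\sigma_W^2}\rho_tf_c(t)+\big(\frac{\lambda^2}{r_\beta\sigma_W^4}-\frac{\lambda}{\sigma_W^2}\big)f_c^2(t),\\ \dot\gamma_t=\frac{1}{r_\alpha}\mu_t\gamma_t+\frac{1}{r_\beta}\eta_t\theta_t-\theta_t+r_v\overline{v}(t)-\frac{\lambda}{r_\beta\sigma_W^2}\eta_tf_d(t),\\ \dot\theta_t=\frac{1}{r_\alpha}\eta_t\gamma_t+\frac{1}{r_\beta}\rho_t\theta_t-\frac{\lambda}{r_\beta\sigma_W^2}\theta_tf_c(t)-\frac{\lambda}{r_\beta\sigma_W^2}f_d(t)\rho_t+\big(\frac{\lambda^2}{r_\beta\sigma_W^4}-\frac{\lambda}{\sigma_W^2}\big)f_c(t)f_d(t),\\ \dot\xi_t=\frac{1}{2r_\alpha}\gamma_t^2+\frac{1}{2r_\beta}\theta_t^2-\frac12\sigma_B^2\mu_t-\frac12\sigma_W^2\rho_t-\frac{\lambda}{r_\beta\sigma_W^2}f_d(t)\theta_t-\frac{r_v\overline{v}(t)^2}{2}+\big(\frac{\lambda^2}{2r_\beta\sigma_W^4}-\frac{\lambda}{2\sigma_W^2}\big)f_d^2(t),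 \end{cases}$$ with terminal conditions $\mu_T=t_v$, $\eta_T=0$, $\rho_T=0$, $\gamma_T=-t_v\overline{v}_T$, $\theta_T=0$, $\xi_T=\frac{t_v}{2}\overline{v}_T^2$. Suppose $f_c\equiv f_d\equiv0$ or $\lambda=0$. Then the unique solution $(\mu,\eta,\rho,\gamma,\theta,\xi)$ of this system on $[0,T]$ satisfies $\eta\equiv\rho\equiv\theta\equiv0$, and consequently the feedback function $$\hat\beta(t,v,y)=-\frac{\eta_t}{r_\beta}v+\Big(\frac{\lambda}{r_\beta\sigma_W^2}f_c(t)-\frac{\rho_t}{r_\beta}\Big)y+\Big(\frac{\lambda}{r_\beta\sigma_W^2}f_d(t)-\frac{\theta_t}{r_\beta}\Big)$$ satisfies $\hat\beta\equiv0$ on $[0,T]\times\mathbb{R}\times\mathbb{R}$.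
   Context: It is a known fact (which may be assumed) that under the condition $0\le\lambda\le r_\beta\sigma_W^2$ this terminal-value ODE system has a unique global solution on $[0,T]$ for every $T>0$. The system arises from a quadratic ansatz $\mathcal{V}(t,v,y)=\frac{\mu_t}{2}v^2+\eta_tvy+\frac{\rho_t}{2}y^2+\gamma_tv+\theta_ty+\xi_t$ for the value function of a linear-quadratic control problem, and $\hat\beta$ is the resulting optimal feedback for the control $\beta$. *)

(* Defs.v *)
From Stdlib Require Import Reals.
From Coquelicot Require Import Coquelicot.
Open Scope R_scope.

Definition cont_on_0T (T : R) (f : R -> R) : Prop :=
  forall t, 0 <= t <= T ->
    filterlim f (within (fun x => 0 <= x <= T) (locally t)) (locally (f t)).

Definition beta_hat (r_beta sigma_W lambda : R) (fc fd eta rho theta : R -> R)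
  (t v y : R) : R :=
  - (eta t / r_beta) * v
  + (lambda / (r_beta * sigma_W ^ 2) * fc t - rho t / r_beta) * y
  + (lambda / (r_beta * sigma_W ^ 2) * fd t - theta t / r_beta).

(* Main.v *)
Require Import Defs.
From Stdlib Require Import Reals.
From Coquelicot Require Import Coquelicot.
From Stdlib Require Import Lra Psatz.
Open Scope R_scope.

Definition clamp (T x : R) := Rmax 0 (Rmin T x).

Lemma clamp_lip T x y : 0 <= T -> Rabs (clamp T y - clamp T x) <= Rabs (y - x).
Proof.
  intros HT; unfold clamp, Rmax, Rmin.
  repeat destruct Rle_dec; unfold Rabs; repeat destruct Rcase_abs; lra.
Qed.

Lemma clamp_in T x : 0 <= T -> 0 <= clamp T x <= T.
Proof. intros HT; unfold clamp, Rmax, Rmin; repeat destruct Rle_dec; lra. Qed.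

Lemma clamp_id T x : 0 <= x <= T -> clamp T x = x.
Proof. intros HT; unfold clamp, Rmax, Rmin; repeat destruct Rle_dec; lra. Qed.

Lemma clamp_cont T f x : 0 <= T -> cont_on_0T T f ->
  continuity_pt (fun y => f (clamp T y)) x.
Proof.
  intros HT Hf. apply continuity_pt_filterlim.
  eapply filterlim_comp; [| apply Hf, clamp_in; exact HT].
  unfold filterlim, filter_le, filtermap, within. intros P [eps He]. exists eps. intros y Hy. apply He; [|apply clamp_in; exact HT].
  unfold ball in *; simpl in *; unfold AbsRing_ball, abs, minus, plus, opp in *; simpl in *.
  eapply Rle_lt_trans; [apply clamp_lip; exact HT| exact Hy].
Qed.

Lemma bound_of T f : 0 <= T -> cont_on_0T T f ->
  exists M, 0 <= M /\ forall t, 0 <= t <= T -> Rabs (f t) <= M.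
Proof.
  intros HT Hf.
  destruct (continuity_ab_maj (fun y => Rabs (f (clamp T y))) 0 T HT) as [x [H1 H2]].
  { intros c _. apply (continuity_pt_comp (fun y => f (clamp T y)) Rabs).
    apply clamp_cont; auto. apply Rcontinuity_abs. }
  exists (Rabs (f (clamp T x))). split. apply Rabs_pos.
  intros t Ht. specialize (H1 t Ht). simpl in H1. rewrite clamp_id in H1; auto.
Qed.

Lemma isd_eq (f : R -> R) (x l l' : R) : is_derive f x l -> l = l' -> is_derive (K:=R_AbsRing) (V:=R_NormedModule) f x l'.
Proof. intros H ->; exact H. Qed.

Lemma der_clamp T (f : R -> R) t (l : R) : 0 < t < T -> is_derive f t l ->
  is_derive (K:=R_AbsRing) (V:=R_NormedModule) (fun x => f (clamp T x)) t l.
Proof.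
  intros Ht Hd. eapply is_derive_ext_loc; [| exact Hd].
  assert (Hp : 0 < Rmin t (T - t)) by (apply Rmin_pos; lra).
  exists (mkposreal _ Hp). intros y Hy.
  unfold ball in *; simpl in *; unfold AbsRing_ball, abs, minus, plus, opp in *; simpl in *.
  pose proof (Rmin_l t (T-t)); pose proof (Rmin_r t (T-t)).
  apply Rabs_lt_between in Hy.
  rewrite clamp_id; auto; lra.
Qed.

Lemma core T ra rb (m g a r h : R -> R) :
  0 < T -> 0 < ra -> 0 < rb ->
  cont_on_0T T m -> cont_on_0T T g -> cont_on_0T T a -> cont_on_0T T r -> cont_on_0T T h ->
  (forall t, 0 < t < T -> is_derive a t (/ ra * m t * a t + / rb * r t * a t - r t)) ->
  (forall t, 0 < t < T -> is_derive r t (/ ra * a t ^ 2 + / rb * r t ^ 2)) ->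
  (forall t, 0 < t < T -> is_derive h t (/ ra * a t * g t + / rb * r t * h t)) ->
  a T = 0 -> r T = 0 -> h T = 0 ->
  forall t, 0 <= t <= T -> a t = 0 /\ r t = 0 /\ h t = 0.
Proof.
  intros HT Hra Hrb cm cg ca cr ch da dr dh aT rT hT.
  assert (HT0 : 0 <= T) by lra.
  destruct (bound_of T m HT0 cm) as [Mm [Mm0 Bm]].
  destruct (bound_of T g HT0 cg) as [Mg [Mg0 Bg]].
  destruct (bound_of T r HT0 cr) as [Mr [Mr0 Br]].
  set (A := / ra). set (B := / rb).
  assert (HA : 0 < A) by (apply Rinv_0_lt_compat; lra).
  assert (HB : 0 < B) by (apply Rinv_0_lt_compat; lra).
  set (C := 2 * Mm * A + 4 * Mr * B + 1 + 2 * Mr * A + Mg * A).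
  set (E := fun x => a (clamp T x) ^ 2 + r (clamp T x) ^ 2 + h (clamp T x) ^ 2).
  set (HH := fun x => E x * exp (C * x)).
  assert (Hc : forall x, continuity_pt HH x).
  { intros x. unfold HH, E.
    apply (continuity_pt_mult (fun x => _ + _ + _) (fun x => exp (C * x))).
    - repeat apply continuity_pt_plus; apply continuity_pt_mult;
        (apply clamp_cont; auto) || (apply continuity_pt_mult; [apply clamp_cont; auto | apply continuity_pt_const; intros ? ?; auto]).
    - apply continuity_pt_filterlim, (ex_derive_continuous (fun x => exp (C * x))).
      auto_derive; auto. }
  assert (Hd : forall t, 0 < t < T -> is_derive HH t
     (exp (C * t) * (2 * a t * (A * m t * a t + B * r t * a t - r t)
        + 2 * r t * (A * a t ^ 2 + B * r t ^ 2) + 2 * h t * (A * a t * g t + B * r t * h t)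
        + C * (a t ^ 2 + r t ^ 2 + h t ^ 2)))).
  { intros t Ht. unfold HH, E.
    pose proof (der_clamp T a t _ Ht (da t Ht)) as Da.
    pose proof (der_clamp T r t _ Ht (dr t Ht)) as Dr.
    pose proof (der_clamp T h t _ Ht (dh t Ht)) as Dh.
    apply is_derive_pow with (n := 2%nat) in Da.
    apply is_derive_pow with (n := 2%nat) in Dr.
    apply is_derive_pow with (n := 2%nat) in Dh.
    assert (De : is_derive (fun x => exp (C * x)) t (C * exp (C * t))).
    { auto_derive; auto. ring. }
    pose proof (is_derive_plus _ _ _ _ _ Da Dr) as D1.
    pose proof (is_derive_plus _ _ _ _ _ D1 Dh) as D2.
    pose proof (is_derive_mult _ _ _ _ _ D2 De ltac:(intros; unfold mult; simpl; ring)) as D3.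
    eapply isd_eq. exact D3.
    rewrite !clamp_id by lra. unfold plus, mult; simpl. fold A B. ring. }
  assert (Hpos : forall t, 0 <= t <= T ->
     0 <= 2 * a t * (A * m t * a t + B * r t * a t - r t)
        + 2 * r t * (A * a t ^ 2 + B * r t ^ 2) + 2 * h t * (A * a t * g t + B * r t * h t)
        + C * (a t ^ 2 + r t ^ 2 + h t ^ 2)).
  { intros t Ht.
    assert (Ht' : 0 <= t <= T) by exact Ht.
    pose proof (Bm t Ht') as bm; pose proof (Bg t Ht') as bg; pose proof (Br t Ht') as br.
    apply Rabs_le_between in bm; apply Rabs_le_between in bg; apply Rabs_le_between in br.
    set (x := a t) in *; set (y := r t) in *; set (z := h t) in *;
    set (mm := m t) in *; set (gg := g t) in *.
    unfold C. clear Hc Hd HH E C. clearbody A B x y z mm gg.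
    assert (0 <= (mm + Mm) * (A * x^2)) by (apply Rmult_le_pos; nra).
    assert (0 <= (y + Mr) * (B * x^2)) by (apply Rmult_le_pos; nra).
    assert (0 <= (y + Mr) * (A * x^2)) by (apply Rmult_le_pos; nra).
    assert (0 <= (y + Mr) * (B * y^2)) by (apply Rmult_le_pos; nra).
    assert (0 <= (y + Mr) * (B * z^2)) by (apply Rmult_le_pos; nra).
    assert (0 <= (x - y)^2) by apply pow2_ge_0.
    assert (0 <= A * (Mg * (x^2 + z^2) + 2 * x * z * gg)).
    { apply Rmult_le_pos; [lra|].
      assert (0 <= (gg + Mg) * (x + z)^2) by (apply Rmult_le_pos; [lra|apply pow2_ge_0]).
      assert (0 <= (Mg - gg) * (x - z)^2) by (apply Rmult_le_pos; [lra|apply pow2_ge_0]).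
      lra. }
    assert (0 <= Mr * B * x^2) by (apply Rmult_le_pos; [nra|apply pow2_ge_0]).
    assert (0 <= (2*Mr*B + 2*Mm*A + 2*Mr*A + Mg * A) * y^2) by (apply Rmult_le_pos; [nra|apply pow2_ge_0]).
    assert (0 <= (2*Mm*A + 2*Mr*B + 1 + 2*Mr*A) * z^2) by (apply Rmult_le_pos; [nra|apply pow2_ge_0]).
    lra. }
  intros t Ht.
  assert (HtT : HH t <= 0).
  { destruct (Req_dec t T) as [->|Hne].
    - unfold HH, E. rewrite clamp_id by lra. rewrite aT, rT, hT. lra.
    - destruct (MVT_gen HH t T _ (fun x Hx => Hd x ltac:(
          pose proof (Rmin_l t T); pose proof (Rmax_r t T);
          rewrite Rmin_left in Hx by lra; rewrite Rmax_right in Hx by lra; lra))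
          (fun x _ => Hc x)) as [c [Hcr Hcv]].
      assert (HH T = 0) by (unfold HH, E; rewrite clamp_id by lra; rewrite aT, rT, hT; lra).
      simpl in c.
      rewrite Rmin_left in Hcr by lra. rewrite Rmax_right in Hcr by lra.
      assert (0 <= exp (C * c) * (2 * a c * (A * m c * a c + B * r c * a c - r c)
        + 2 * r c * (A * a c ^ 2 + B * r c ^ 2) + 2 * h c * (A * a c * g c + B * r c * h c)
        + C * (a c ^ 2 + r c ^ 2 + h c ^ 2))).
      { apply Rmult_le_pos. apply Rlt_le, exp_pos. apply Hpos. lra. }
      nra. }
  unfold HH, E in HtT. rewrite clamp_id in HtT by lra.
  pose proof (exp_pos (C * t)).
  pose proof (pow2_ge_0 (a t)); pose proof (pow2_ge_0 (r t)); pose proof (pow2_ge_0 (h t)).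
  assert (a t ^ 2 + r t ^ 2 + h t ^ 2 <= 0) by nra.
  assert (a t ^ 2 = 0 /\ r t ^ 2 = 0 /\ h t ^ 2 = 0) as [E1 [E2 E3]] by lra.
  repeat split; nra.
Qed.

Theorem corollary1
  (T r_alpha r_beta r_v t_v sigma_B sigma_W vbarT lambda : R)
  (vbar fc fd : R -> R)
  (mu eta rho gamma theta xi : R -> R) :
  0 < T -> 0 < r_alpha -> 0 < r_beta -> 0 < r_v -> 0 < t_v ->
  0 < sigma_B -> 0 < sigma_W ->
  cont_on_0T T vbar -> cont_on_0T T fc -> cont_on_0T T fd ->
  0 <= lambda <= r_beta * sigma_W ^ 2 ->
  (* (mu, eta, rho, gamma, theta, xi) is a solution of the ODE system on [0,T]:
     continuous on [0,T], differentiable on (0,T) with the given derivatives *)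
  cont_on_0T T mu -> cont_on_0T T eta -> cont_on_0T T rho ->
  cont_on_0T T gamma -> cont_on_0T T theta -> cont_on_0T T xi ->
  (forall t, 0 < t < T ->
     is_derive mu t
       (/ r_alpha * mu t ^ 2 + / r_beta * eta t ^ 2 - 2 * eta t - r_v)) ->
  (forall t, 0 < t < T ->
     is_derive eta t
       (/ r_alpha * mu t * eta t + / r_beta * rho t * eta t - rho t
        - lambda / (r_beta * sigma_W ^ 2) * eta t * fc t)) ->
  (forall t, 0 < t < T ->
     is_derive rho t
       (/ r_alpha * eta t ^ 2 + / r_beta * rho t ^ 2
        - 2 * lambda / (r_beta * sigma_W ^ 2) * rho t * fc t
        + (lambda ^ 2 / (r_beta * sigma_W ^ 4) - lambda / sigma_W ^ 2) * fc t ^ 2)) ->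
  (forall t, 0 < t < T ->
     is_derive gamma t
       (/ r_alpha * mu t * gamma t + / r_beta * eta t * theta t - theta t
        + r_v * vbar t - lambda / (r_beta * sigma_W ^ 2) * eta t * fd t)) ->
  (forall t, 0 < t < T ->
     is_derive theta t
       (/ r_alpha * eta t * gamma t + / r_beta * rho t * theta t
        - lambda / (r_beta * sigma_W ^ 2) * theta t * fc t
        - lambda / (r_beta * sigma_W ^ 2) * fd t * rho t
        + (lambda ^ 2 / (r_beta * sigma_W ^ 4) - lambda / sigma_W ^ 2)
          * fc t * fd t)) ->
  (forall t, 0 < t < T ->
     is_derive xi t
       (/ (2 * r_alpha) * gamma t ^ 2 + / (2 * r_beta) * theta t ^ 2
        - / 2 * sigma_B ^ 2 * mu t - / 2 * sigma_W ^ 2 * rho t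
        - lambda / (r_beta * sigma_W ^ 2) * fd t * theta t
        - r_v * vbar t ^ 2 / 2
        + (lambda ^ 2 / (2 * r_beta * sigma_W ^ 4) - lambda / (2 * sigma_W ^ 2))
          * fd t ^ 2)) ->
  mu T = t_v -> eta T = 0 -> rho T = 0 ->
  gamma T = - t_v * vbarT -> theta T = 0 -> xi T = t_v / 2 * vbarT ^ 2 ->
  ((forall t, 0 <= t <= T -> fc t = 0 /\ fd t = 0) \/ lambda = 0) ->
  (forall t, 0 <= t <= T -> eta t = 0 /\ rho t = 0 /\ theta t = 0) /\
  (forall t v y, 0 <= t <= T ->
     beta_hat r_beta sigma_W lambda fc fd eta rho theta t v y = 0).
Proof.
Proof.
  intros HT Hra Hrb Hrv Htv HsB HsW cvb cfc cfd Hl cmu ceta crho cgam cth cxi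
    dmu deta drho dgam dth dxi muT etaT rhoT gamT thT xiT Hcase.
  assert (Hz : forall t, 0 <= t <= T -> lambda * fc t = 0 /\ lambda * fd t = 0).
  { intros t Ht. destruct Hcase as [Hc | ->].
    - destruct (Hc t Ht) as [-> ->]. split; ring.
    - split; ring. }
  assert (Z : forall t, 0 <= t <= T -> eta t = 0 /\ rho t = 0 /\ theta t = 0).
  { apply (core T r_alpha r_beta mu gamma eta rho theta); auto.
    - intros t Ht. eapply isd_eq. apply deta; auto. destruct Hcase as [Hc| ->]; [destruct (Hc t ltac:(lra)) as [F1 F2]; rewrite ?F1, ?F2 |]; unfold Rdiv; ring.
    - intros t Ht. eapply isd_eq. apply drho; auto. destruct Hcase as [Hc| ->]; [destruct (Hc t ltac:(lra)) as [F1 F2]; rewrite ?F1, ?F2 |]; unfold Rdiv; ring.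
    - intros t Ht. eapply isd_eq. apply dth; auto. destruct Hcase as [Hc| ->]; [destruct (Hc t ltac:(lra)) as [F1 F2]; rewrite ?F1, ?F2 |]; unfold Rdiv; ring. }
  split; [exact Z|].
  intros t v y Ht. destruct (Z t Ht) as [E1 [E2 E3]].
  unfold beta_hat. rewrite E1, E2, E3.
  destruct Hcase as [Hc| ->]; [destruct (Hc t Ht) as [F1 F2]; rewrite ?F1, ?F2 |]; unfold Rdiv; ring.
Qed.
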